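(* Let $A$ and $B$ be pure parabolic isometries of $\mathbb{H}^4$. Then $A$ and $B$ are linked.
   Context: A pure parabolic isometry of $\mathbb{H}^4$ is a composition of reflections in two hyperplanes tangent at a unique point at infinity. Two isometries $A,B$ are linked if there are involutions $\alpha,\beta,\gamma$ of $\mathbb{H}^4$ with $A=\alpha\beta$ and $B=\beta\gamma$. *)

(* Defs.v *)
(* hyperboloid model of H^4 in Minkowski space R^{4,1}. *)
From HB Require Import structures.
From mathcomp Require Import all_boot all_order all_algebra.
From mathcomp Require Import reals.
Set Implicit Arguments. Unset Strict Implicit. Unset Printing Implicit Defensive.
Import Order.TTheory GRing.Theory Num.Theory.
Local Open Scope ring_scope.

Section Hyp.
Variable R : realType.

(* coordinates 0..3 are spacelike, coordinate 4 (= ord_max) is timelike *)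
Definition tidx : 'I_5 := ord_max.

Definition lorJ : 'M[R]_5 :=
  diag_mx (\row_(i < 5) (if i == tidx then -1 else 1)).

Definition lor (x y : 'cV[R]_5) : R := (x^T *m lorJ *m y) 0 0.

Definition hpoint (x : 'cV[R]_5) : Prop := lor x x = -1 /\ 0 < x tidx 0.

(* representatives of points at infinity: nonzero future-directed null vectors
   (two representatives give the same ideal point iff positively proportional) *)
Definition ideal_rep (v : 'cV[R]_5) : Prop := lor v v = 0 /\ 0 < v tidx 0.

(* isometries of H^4 : the group O^+(4,1) acting linearly *)
Definition isometry (A : 'M[R]_5) : Prop :=
  A^T *m lorJ *m A = lorJ /\ 0 < A tidx tidx.

Definition involution (A : 'M[R]_5) : Prop :=
  isometry A /\ A *m A = 1%:M /\ A <> 1%:M.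

(* a hyperplane of H^4 is given by a unit spacelike normal n :
   P_n = { x in H^4 | <x,n> = 0 }; its reflection is x |-> x - 2 <x,n> n *)
Definition unit_spacelike (n : 'cV[R]_5) : Prop := lor n n = 1.

Definition refl (n : 'cV[R]_5) : 'M[R]_5 :=
  1%:M - 2%:R *: (n *m n^T *m lorJ).

Definition tangent_at_infinity (n m : 'cV[R]_5) : Prop :=
  (forall x, hpoint x -> ~ (lor x n = 0 /\ lor x m = 0)) /\
  exists v, [/\ ideal_rep v, lor v n = 0, lor v m = 0 &
    forall w, ideal_rep w -> lor w n = 0 -> lor w m = 0 ->
      exists2 c : R, 0 < c & w = c *: v].

Definition pure_parabolic (A : 'M[R]_5) : Prop :=
  exists n m, [/\ unit_spacelike n, unit_spacelike m,
    tangent_at_infinity n m & A = refl n *m refl m].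

Definition linked (A B : 'M[R]_5) : Prop :=
  exists a b c, [/\ involution a, involution b, involution c,
    A = a *m b & B = b *m c].

End Hyp.

(* Main.v *)
Require Import Defs.
From HB Require Import structures.
From mathcomp Require Import all_boot all_order all_algebra.
From mathcomp Require Import reals.
From mathcomp Require Import ring lra.
Set Implicit Arguments. Unset Strict Implicit. Unset Printing Implicit Defensive.
Import Order.TTheory GRing.Theory Num.Theory.
Local Open Scope ring_scope.

Section H.
Variable R : realType.
Implicit Types (x y z a b c d n m v w : 'cV[R]_5).

Local Notation J := (lorJ R).
Definition o0 : 'I_5 := @Ordinal 5 0 isT.
Definition o1 : 'I_5 := @Ordinal 5 1 isT.
Definition o2 : 'I_5 := @Ordinal 5 2 isT.
Definition o3 : 'I_5 := @Ordinal 5 3 isT.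

Lemma sum5 (F : 'I_5 -> R) : \sum_(i < 5) F i = F o0 + F o1 + F o2 + F o3 + F tidx.
Proof.
rewrite !big_ord_recr big_ord0 /= add0r.
by congr (_ + _ + _ + _ + _); congr F; apply: val_inj.
Qed.

Lemma Jd (i : 'I_5) : (\row_(i < 5) (if i == tidx then -1 else 1) : 'rV[R]_5) 0 i
   = if i == tidx then -1 else 1.
Proof. by rewrite mxE. Qed.

Lemma lorE x y : lor x y = x o0 0 * y o0 0 + x o1 0 * y o1 0 + x o2 0 * y o2 0
   + x o3 0 * y o3 0 - x tidx 0 * y tidx 0.
Proof.
rewrite /lor /lorJ mul_mx_diag !mxE sum5 !mxE /=.
ring.
Qed.

Lemma lorC x y : lor x y = lor y x.
Proof. rewrite !lorE; ring. Qed.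

Lemma lorDl x y z : lor (x + y) z = lor x z + lor y z.
Proof. rewrite !lorE !mxE; ring. Qed.
Lemma lorDr x y z : lor z (x + y) = lor z x + lor z y.
Proof. rewrite !lorE !mxE; ring. Qed.
Lemma lorZl (s : R) x z : lor (s *: x) z = s * lor x z.
Proof. rewrite !lorE !mxE; ring. Qed.
Lemma lorZr (s : R) x z : lor z (s *: x) = s * lor z x.
Proof. rewrite !lorE !mxE; ring. Qed.
Lemma lorNl x z : lor (- x) z = - lor x z.
Proof. rewrite !lorE !mxE; ring. Qed.
Lemma lorNr x z : lor z (- x) = - lor z x.
Proof. rewrite !lorE !mxE; ring. Qed.
Lemma lorBl x y z : lor (x - y) z = lor x z - lor y z.
Proof. rewrite !lorE !mxE; ring. Qed.
Lemma lorBr x y z : lor z (x - y) = lor z x - lor z y.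
Proof. rewrite !lorE !mxE; ring. Qed.

Fact E_key : unit. Proof. exact: tt. Qed.
Definition E a b : 'M[R]_5 := locked_with E_key (a *m b^T *m J).
Lemma Eu a b : E a b = a *m b^T *m J.
Proof. by rewrite /E; case: E_key. Qed.

Lemma E_entry a b i j : E a b i j = a i 0 * b j 0 * (if j == tidx then -1 else 1).
Proof.
rewrite !Eu /lorJ mul_mx_diag !mxE big_ord1 !mxE //.
Qed.

Lemma lor11 a b : a^T *m J *m b = (lor a b)%:M.
Proof. exact: mx11_scalar. Qed.

Lemma E_mul a b c d : E a b *m E c d = lor b c *: E a d.
Proof.
rewrite !Eu !mulmxA.
have -> : a *m b^T *m J *m c = a *m (b^T *m J *m c) by rewrite !mulmxA.
by rewrite lor11 mul_mx_scalar -!scalemxAl.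
Qed.

Lemma E_mulv a b x : E a b *m x = lor b x *: a.
Proof.
have -> : E a b *m x = a *m (b^T *m J *m x) by rewrite !Eu !mulmxA.
by rewrite lor11 mul_mx_scalar.
Qed.

Lemma J_tr : J^T = J :> 'M[R]_5.
Proof. by rewrite /lorJ tr_diag_mx. Qed.

Lemma E_trJ a b : (E a b)^T *m J = J *m E b a.
Proof. by rewrite !Eu !trmx_mul trmxK J_tr !mulmxA. Qed.

Lemma trE a b : \tr (E a b) = lor b a.
Proof. by rewrite !Eu -mulmxA mxtrace_mulC lor11 mxtrace_scalar mulr1n. Qed.

Lemma JJ : J *m J = 1%:M :> 'M[R]_5.
Proof.
apply/matrixP => i j; rewrite {1}/lorJ mul_diag_mx !mxE.
case: (i == j); case: (i == tidx); rewrite ?mulr1n ?mulr0n ?mulr0 /=; ring.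
Qed.


Lemma reflE x : refl x = 1%:M - 2%:R *: E x x.
Proof. by rewrite Eu. Qed.

Lemma refl_mul x y : refl x *m refl y =
  1%:M - 2%:R *: E x x - 2%:R *: E y y + (4 * lor x y) *: E x y.
Proof.
rewrite !reflE !mulmxBl !mulmxBr !mul1mx !mulmx1 -!scalemxAl -!scalemxAr E_mul.
apply/matrixP => i j; rewrite !mxE !E_entry; ring.
Qed.

Lemma refl_sq x : lor x x = 1 -> refl x *m refl x = 1%:M.
Proof.
move=> h; rewrite refl_mul h; apply/matrixP => i j; rewrite !mxE !E_entry; ring.
Qed.

Lemma refl_opp x : refl (- x) = refl x.
Proof. rewrite !reflE; apply/matrixP => i j; rewrite !mxE !E_entry !mxE; ring. Qed.

Lemma refl_shift n v (a c d : R) : lor n n = 1 -> lor v v = 0 -> lor n v = 0 ->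
  refl (n + a *: v) *m refl (n + c *: v) = refl (n + (a + d) *: v) *m refl (n + (c + d) *: v).
Proof.
move=> hn hv hnv; rewrite !refl_mul.
have hvn : lor v n = 0 by rewrite lorC.
rewrite !lorDl !lorDr !lorZl !lorZr hn hv hnv hvn.
apply/matrixP => i j; rewrite !mxE !E_entry !mxE; ring.
Qed.

Lemma isoJ (b : 'M[R]_5) : b^T *m J *m b = J -> b *m b = 1%:M -> b^T *m J = J *m b.
Proof.
move=> h1 h2; have := congr1 (mulmx^~ b) h1.
by rewrite -!mulmxA h2 mulmx1 => ->.
Qed.

Lemma conj_refl (b : 'M[R]_5) x : b^T *m J *m b = J -> b *m b = 1%:M ->
  b *m refl x *m b = refl (b *m x).
Proof.
move=> h1 h2; rewrite !reflE mulmxBr mulmxBl mulmx1 h2 -scalemxAr -scalemxAl.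
congr (_ - _ *: _).
rewrite !Eu !mulmxA -(mulmxA _ J b) -isoJ // trmx_mul !mulmxA //.
Qed.

Lemma refl_iso x : lor x x = 1 -> Defs.isometry (refl x).
Proof.
move=> h; split.
  have -> : (refl x)^T *m J = J *m refl x.
    by rewrite reflE linearB /= linearZ /= trmx1 mulmxBl mul1mx -scalemxAl E_trJ
      mulmxBr mulmx1 -scalemxAr.
  by rewrite -mulmxA refl_sq // mulmx1.
rewrite reflE !mxE E_entry eqxx /=. nra.
Qed.

Lemma trN (A : 'M[R]_5) : \tr (- A) = - \tr A.
Proof. by rewrite -scaleN1r mxtraceZ mulN1r. Qed.

Lemma trace_refl2 x y : lor x x = 1 -> lor y y = 1 -> \tr (refl x *m refl y) = 1 + 4 * lor x y ^+ 2.
Proof.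
move=> hx hy; rewrite refl_mul !mxtraceD !trN !mxtraceZ !trE mxtrace1 hx hy (lorC y x).
rewrite -[5%:R]/(5 : R); ring.
Qed.


Lemma CS4 (a0 a1 a2 a3 b0 b1 b2 b3 : R) :
  (a0*b0 + a1*b1 + a2*b2 + a3*b3)^+2 <=
  (a0^+2 + a1^+2 + a2^+2 + a3^+2) * (b0^+2 + b1^+2 + b2^+2 + b3^+2).
Proof.
rewrite -subr_ge0.
have -> : (a0^+2 + a1^+2 + a2^+2 + a3^+2) * (b0^+2 + b1^+2 + b2^+2 + b3^+2)
  - (a0*b0 + a1*b1 + a2*b2 + a3*b3)^+2 =
  (a0*b1-a1*b0)^+2 + (a0*b2-a2*b0)^+2 + (a0*b3-a3*b0)^+2
  + (a1*b2-a2*b1)^+2 + (a1*b3-a3*b1)^+2 + (a2*b3-a3*b2)^+2 by ring.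
by rewrite !addr_ge0 ?sqr_ge0.
Qed.

Lemma XJXt (X : 'M[R]_5) : X^T *m J *m X = J -> X *m J *m X^T = J.
Proof.
move=> h.
have h1 : (J *m X^T *m J) *m X = 1%:M.
  have -> : J *m X^T *m J *m X = J *m (X^T *m J *m X) by rewrite !mulmxA.
  by rewrite h JJ.
have h2 := mulmx1C h1.
have h3 : X *m J *m X^T = X *m (J *m X^T *m J) *m J.
  by rewrite -!mulmxA JJ mulmx1.
by rewrite h3 h2 mul1mx.
Qed.

Lemma iso_mul (X Y : 'M[R]_5) : Defs.isometry X -> Defs.isometry Y -> Defs.isometry (X *m Y).
Proof.
move=> [hX pX] [hY pY]; split.
  have -> : (X *m Y)^T *m J *m (X *m Y) = Y^T *m (X^T *m J *m X) *m Y
    by rewrite trmx_mul !mulmxA.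
  by rewrite hX.
have hX' := XJXt hX.
have r := congr1 (fun M : 'M[R]_5 => M tidx tidx) hX'.
have c := congr1 (fun M : 'M[R]_5 => M tidx tidx) hY.
move: r c; rewrite /= /lorJ !mul_mx_diag !mxE !sum5 !mxE /=.
move=> r c.
set x0 := X tidx o0; set x1 := X tidx o1; set x2 := X tidx o2; set x3 := X tidx o3.
set y0 := Y o0 tidx; set y1 := Y o1 tidx; set y2 := Y o2 tidx; set y3 := Y o3 tidx.
set xt := X tidx tidx; set yt := Y tidx tidx.
have eP : x0^+2+x1^+2+x2^+2+x3^+2 = xt^+2 - 1.
  rewrite !expr2; move: r; rewrite mulr1n !mulr1 /x0 /x1 /x2 /x3 /xt => r; lra.
have eQ : y0^+2+y1^+2+y2^+2+y3^+2 = yt^+2 - 1.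
  rewrite !expr2; move: c; rewrite mulr1n !mulr1 /y0 /y1 /y2 /y3 /yt => c; lra.
have cs := CS4 x0 x1 x2 x3 y0 y1 y2 y3.
rewrite eP eQ in cs.
set S := x0 * y0 + x1 * y1 + x2 * y2 + x3 * y3 in cs *.
have ht : 0 < xt * yt by apply: mulr_gt0.
have hx1 : 1 <= xt^+2 by rewrite -subr_ge0 -eP !addr_ge0 ?sqr_ge0.
have hy1 : 1 <= yt^+2 by rewrite -subr_ge0 -eQ !addr_ge0 ?sqr_ge0.
have h2 : S^+2 < (xt * yt)^+2 by rewrite exprMn; nra.
nra.
Qed.


Lemma cV5P x y : x o0 0 = y o0 0 -> x o1 0 = y o1 0 -> x o2 0 = y o2 0 ->
  x o3 0 = y o3 0 -> x tidx 0 = y tidx 0 -> x = y.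
Proof.
move=> h0 h1 h2 h3 h4; apply/matrixP => i j; rewrite [j]ord1.
case: i => [[|[|[|[|[|k]]]]] Hi] //.
- by rewrite (_ : Ordinal Hi = o0) //; apply: val_inj.
- by rewrite (_ : Ordinal Hi = o1) //; apply: val_inj.
- by rewrite (_ : Ordinal Hi = o2) //; apply: val_inj.
- by rewrite (_ : Ordinal Hi = o3) //; apply: val_inj.
- by rewrite (_ : Ordinal Hi = tidx) //; apply: val_inj.
Qed.

Lemma inv_key n v (g : R) (b : 'M[R]_5) :
  lor n n = 1 -> lor v v = 0 -> lor n v = 0 ->
  b^T *m J *m b = J -> b *m b = 1%:M -> b *m v = v ->
  (forall x, lor x v = 0 -> exists s : R, b *m x = - x + s *: v) ->
  (refl n *m refl (n + g *: v) *m b) *m (refl n *m refl (n + g *: v) *m b) = 1%:M.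
Proof.
move=> hn hv hnv hJ hbb hbv Hinv.
have [s hs] := Hinv n hnv.
set m := n + g *: v.
have bm : b *m m = - (n + (-(s+g)) *: v).
  rewrite /m mulmxDr -scalemxAr hs hbv.
  apply/matrixP => i j; rewrite !mxE; ring.
have bn : b *m n = - (n + (-s) *: v).
  rewrite hs; apply/matrixP => i j; rewrite !mxE; ring.
have key : refl n *m refl m *m b *m (refl n *m refl m *m b) =
  refl n *m refl m *m (b *m refl n *m b) *m (b *m refl m *m b).
  by rewrite !mulmxA -(mulmxA _ b b) hbb mulmx1.
rewrite key !conj_refl // bn bm !refl_opp.
rewrite -mulmxA.
have -> : refl (n + (-s) *: v) *m refl (n + (-(s+g)) *: v) = refl m *m refl n.
  rewrite (refl_shift (-s) (-(s+g)) (s+g)) //.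
  have -> : -s + (s+g) = g by ring.
  have -> : -(s+g) + (s+g) = 0 by ring.
  by rewrite scale0r addr0.
have hm : lor m m = 1.
  by rewrite /m lorDl !lorDr !lorZl !lorZr hn hv hnv lorC hnv; ring.
rewrite mulmxA -(mulmxA (refl n)) refl_sq // mulmx1 refl_sq //.
Qed.


Definition b0 v z : 'M[R]_5 := (2 / lor v z) *: (E v z + E z v) - 1%:M.

Lemma b0C v z : b0 v z = b0 z v.
Proof. by rewrite /b0 (lorC v z) (addrC (E v z)). Qed.

Lemma b0_mulv v z x : b0 v z *m x = (2 / lor v z) *: (lor z x *: v + lor v x *: z) - x.
Proof. by rewrite /b0 mulmxBl mul1mx -scalemxAl mulmxDl !E_mulv. Qed.

Lemma b0_sq v z : lor v v = 0 -> lor z z = 0 -> lor v z != 0 -> b0 v z *m b0 v z = 1%:M.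
Proof.
move=> hv hz hk; rewrite /b0 mulmxBl !mulmxBr !mul1mx !mulmx1 -!scalemxAl -!scalemxAr.
rewrite !mulmxDl !mulmxDr !E_mul hv hz (lorC z v).
apply/matrixP => i j; rewrite !mxE !E_entry; field; exact: hk.
Qed.

Lemma b0_T v z : (b0 v z)^T *m J = J *m b0 v z.
Proof.
rewrite /b0 linearB /= linearZ /= linearD /= trmx1 mulmxBl mul1mx -scalemxAl mulmxDl !E_trJ.
rewrite mulmxBr mulmx1 -scalemxAr mulmxDr. by rewrite (addrC (J *m E z v)).
Qed.

Lemma b0_form v z : lor v v = 0 -> lor z z = 0 -> lor v z != 0 ->
  (b0 v z)^T *m J *m b0 v z = J.
Proof. by move=> hv hz hk; rewrite b0_T -mulmxA b0_sq // mulmx1. Qed.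

Lemma tr_b0 v z : lor v z != 0 -> \tr (b0 v z) = -1.
Proof.
move=> hk; rewrite /b0 raddfB /= mxtraceZ mxtraceD !trE mxtrace1 (lorC z v).
rewrite -[5%:R]/(5 : R); field; exact: hk.
Qed.

Lemma null_coord v : lor v v = 0 ->
  v o0 0 ^+ 2 + v o1 0 ^+ 2 + v o2 0 ^+ 2 + v o3 0 ^+ 2 = v tidx 0 ^+ 2.
Proof. rewrite lorE !expr2 => h; lra. Qed.

Lemma b0_tt v z : lor v v = 0 -> lor z z = 0 -> 0 < v tidx 0 -> 0 < z tidx 0 ->
  lor v z != 0 -> 0 < b0 v z tidx tidx.
Proof.
move=> hv hz pv pz hk.
have cs := CS4 (v o0 0) (v o1 0) (v o2 0) (v o3 0) (z o0 0) (z o1 0) (z o2 0) (z o3 0).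
rewrite (null_coord hv) (null_coord hz) in cs.
move: hk; rewrite /b0 !mxE !E_entry eqxx /= mulr1n.
have -> : lor v z = (v o0 0 * z o0 0 + v o1 0 * z o1 0 + v o2 0 * z o2 0 + v o3 0 * z o3 0)
  - v tidx 0 * z tidx 0 by rewrite lorE.
set S := (v o0 0 * z o0 0 + _ + _ + _) in cs *.
set p := v tidx 0 * z tidx 0.
move=> hk.
have pp : 0 < p by apply: mulr_gt0.
have hS : S <= p.
  have : S^+2 <= p^+2 by rewrite /p exprMn.
  nra.
have hS' : - p <= S.
  have : S^+2 <= p^+2 by rewrite /p exprMn.
  nra.
have hne : S != p by move: hk; rewrite subr_eq0.
have hK : 0 < p - S by rewrite subr_gt0 lt_neqAle hS andbT.
have -> : 2 / (S - p) * (p * -1 + z tidx 0 * v tidx 0 * -1) - 1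
  = (4 * p - (p - S)) / (p - S).
  rewrite /p; field; rewrite -/p; apply/andP; split; last by [].
  by rewrite subr_eq0 eq_sym.
apply: divr_gt0 => //; lra.
Qed.

Lemma b0_invol v z : lor v v = 0 -> lor z z = 0 -> 0 < v tidx 0 -> 0 < z tidx 0 ->
  lor v z != 0 -> involution (b0 v z).
Proof.
move=> hv hz pv pz hk; split; [split|split].
- exact: b0_form.
- exact: b0_tt.
- exact: b0_sq.
- move=> h; have := tr_b0 hk; rewrite h mxtrace1 -[5%:R]/(5 : R) => /eqP; lra.
Qed.

Lemma b0_fix v z : lor v v = 0 -> lor v z != 0 -> b0 v z *m v = v.
Proof.
move=> hv hk; rewrite b0_mulv hv (lorC z v).
apply/matrixP => i j; rewrite !mxE; field; exact: hk.
Qed.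

Lemma b0_inv v z x : lor x v = 0 -> lor v z != 0 ->
  b0 v z *m x = - x + (2 / lor v z * lor z x) *: v.
Proof.
move=> hx hk; rewrite b0_mulv (lorC v x) hx.
apply/matrixP => i j; rewrite !mxE; ring.
Qed.




Lemma sq4_0 (a b c d : R) : a^+2 + b^+2 + c^+2 + d^+2 = 0 -> [/\ a = 0, b = 0, c = 0 & d = 0].
Proof.
move=> h.
have h0 := sqr_ge0 a; have h1 := sqr_ge0 b; have h2 := sqr_ge0 c; have h3 := sqr_ge0 d.
have ha : a^+2 = 0 by lra.
have hb : b^+2 = 0 by lra.
have hc : c^+2 = 0 by lra.
have hd : d^+2 = 0 by lra.
by split; apply/eqP; rewrite -sqrf_eq0; apply/eqP.
Qed.

Lemma null_orth v w : lor v v = 0 -> lor w w = 0 -> 0 < v tidx 0 -> 0 < w tidx 0 ->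
  lor v w = 0 -> w = (w tidx 0 / v tidx 0) *: v.
Proof.
move=> hv hw pv pw hvw.
have nv := null_coord hv; have nw := null_coord hw.
have e : v o0 0 * w o0 0 + v o1 0 * w o1 0 + v o2 0 * w o2 0 + v o3 0 * w o3 0
   = v tidx 0 * w tidx 0 by move: hvw; rewrite lorE => h; lra.
set l := w tidx 0 / v tidx 0.
have hs : (w o0 0 - l * v o0 0)^+2 + (w o1 0 - l * v o1 0)^+2 + (w o2 0 - l * v o2 0)^+2
   + (w o3 0 - l * v o3 0)^+2 = 0.
  have -> : (w o0 0 - l * v o0 0)^+2 + (w o1 0 - l * v o1 0)^+2 + (w o2 0 - l * v o2 0)^+2
   + (w o3 0 - l * v o3 0)^+2 =
   (w o0 0 ^+ 2 + w o1 0 ^+ 2 + w o2 0 ^+ 2 + w o3 0 ^+ 2)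
   - 2 * l * (v o0 0 * w o0 0 + v o1 0 * w o1 0 + v o2 0 * w o2 0 + v o3 0 * w o3 0)
   + l^+2 * (v o0 0 ^+ 2 + v o1 0 ^+ 2 + v o2 0 ^+ 2 + v o3 0 ^+ 2) by ring.
  rewrite nv nw e /l; field; exact: lt0r_neq0.
have [h0 h1 h2 h3] := sq4_0 hs.
apply: cV5P; rewrite !mxE; try lra.
rewrite /l; field; exact: lt0r_neq0.
Qed.

Definition et : 'cV[R]_5 := \col_i (if i == tidx then 1 else 0).

Lemma lor_et y : lor et y = - y tidx 0.
Proof. rewrite lorE !mxE /=; ring. Qed.

Lemma tangent_struct n m : unit_spacelike n -> unit_spacelike m -> tangent_at_infinity n m ->
  exists v (g : R), [/\ ideal_rep v, lor n v = 0 & refl m = refl (n + g *: v)].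
Proof.
rewrite /unit_spacelike => hn hm [H1 [v [[hv pv] hvn hvm U]]].
have hnv : lor n v = 0 by rewrite lorC.
have hmv : lor m v = 0 by rewrite lorC.
set c := lor n m.
have hmn : lor m n = c by rewrite lorC.
set w := m - c *: n.
have hww : lor w w = 1 - c^+2.
  rewrite /w !lorBl !lorBr !lorZl !lorZr hn hm hmn -/c; ring.
have hwv : lor w v = 0 by rewrite /w lorBl lorZl hmv hnv; ring.
have hwn : lor w n = 0 by rewrite /w lorBl lorZl hmn hn; ring.
have hwm : lor w m = 1 - c^+2 by rewrite /w lorBl lorZl hm -/c; ring.
suff [g' hg] : exists g' : R, m = c *: n + g' *: v.
  have hc : c^+2 = 1.
    have := hm; rewrite hg !lorDl !lorDr !lorZl !lorZr hn hv hnv lorC hnv.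
    move=> h; rewrite -h; ring.
  have : c = 1 \/ c = -1.
    have : (c - 1) * (c + 1) = 0 by rewrite -subr_sqr hc expr1n subrr.
    move/eqP; rewrite mulf_eq0 => /orP [/eqP h|/eqP h]; [left|right]; lra.
  case=> hc1.
    exists v, g'; split => //; congr refl; rewrite hg hc1 scale1r //.
  exists v, (- g'); split => //; rewrite -refl_opp; congr refl; rewrite hg hc1.
  apply/matrixP => i j; rewrite !mxE; ring.
case: (ltgtP (c^+2) 1) => hc.
- (* c^2 < 1: an hpoint lies on both hyperplanes *)
  exfalso.
  set D := 1 - c^+2.
  have hD : 0 < D by rewrite /D subr_gt0.
  set p := lor et n; set q := lor et m.
  set al := - (p - c * q) / D; set be := - (q - c * p) / D.
  set x := et + al *: n + be *: m.
  have hxn : lor x n = 0.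
    rewrite /x !lorDl !lorZl hn hmn -/p /al /be; rewrite /D; field; rewrite -/D; exact: lt0r_neq0.
  have hxm : lor x m = 0.
    rewrite /x !lorDl !lorZl hm -/c -/q /al /be; rewrite /D; field; rewrite -/D; exact: lt0r_neq0.
  have hxx : lor x x <= -1.
    have -> : lor x x = -1 + al * p + be * q.
      rewrite {1}/x !lorDl !lorZl (lorC n x) (lorC m x) hxn hxm !mulr0 !addr0.
      rewrite /x !lorDr !lorZr lor_et mxE /= -/p -/q; ring.
    have hE : al * p + be * q = - (((p - c * q)^+2 + D * q^+2) / D).
      rewrite /al /be /D; field; rewrite -/D; exact: lt0r_neq0.
    have hnn : 0 <= ((p - c * q)^+2 + D * q^+2) / D.
      apply: divr_ge0; last exact: ltW.
      by rewrite addr_ge0 ?sqr_ge0 // mulr_ge0 ?sqr_ge0 // ltW.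
    lra.
  have xt0 : x tidx 0 != 0.
    apply/negP => /eqP h0; move: hxx; rewrite lorE h0 mulr0 subr0.
    have := sqr_ge0 (x o0 0); have := sqr_ge0 (x o1 0); have := sqr_ge0 (x o2 0);
      have := sqr_ge0 (x o3 0); rewrite !expr2; lra.
  have [x' [h1 h2 h3 h4]] : exists x', [/\ lor x' n = 0, lor x' m = 0, lor x' x' <= -1 & 0 < x' tidx 0].
    case: (ltgtP (x tidx 0) 0) => hxt.
    + exists (- x); rewrite !lorNl !lorNr hxn hxm opprK oppr0 mxE oppr_gt0; split => //.
    + by exists x.
    + by move: xt0; rewrite hxt eqxx.
  set r := Num.sqrt (- lor x' x').
  have hr : 0 < r by rewrite sqrtr_gt0; lra.
  have hr2 : r^+2 = - lor x' x' by rewrite sqr_sqrtr //; lra.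
  apply: (H1 (r^-1 *: x')); split.
  - rewrite lorZl lorZr mulrA -expr2 exprVn hr2; field; lra.
  - by rewrite mxE mulr_gt0 // invr_gt0.
  - by rewrite !lorZl h1 mulr0.
  - by rewrite !lorZl h2 mulr0.
- (* c^2 > 1: w is timelike and orthogonal to the null vector v *)
  exfalso.
  have cs := CS4 (w o0 0) (w o1 0) (w o2 0) (w o3 0) (v o0 0) (v o1 0) (v o2 0) (v o3 0).
  rewrite (null_coord hv) in cs.
  have e : w o0 0 * v o0 0 + w o1 0 * v o1 0 + w o2 0 * v o2 0 + w o3 0 * v o3 0
     = w tidx 0 * v tidx 0 by move: hwv; rewrite lorE => h; lra.
  have tl : w o0 0 ^+2 + w o1 0 ^+2 + w o2 0 ^+2 + w o3 0 ^+2 < w tidx 0 ^+ 2.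
    move: hww; rewrite lorE !expr2 => h; rewrite -!expr2; nra.
  rewrite e exprMn in cs.
  have vt2 : 0 < v tidx 0 ^+ 2 by rewrite exprn_gt0.
  nra.
-
  have hw0 : lor w w = 0 by rewrite hww hc subrr.
  case: (ltgtP (w tidx 0) 0) => hwt.
  + have i1 : ideal_rep (- w) by split; [rewrite lorNl lorNr opprK | rewrite mxE oppr_gt0].
    have i2 : lor (- w) n = 0 by rewrite lorNl hwn oppr0.
    have i3 : lor (- w) m = 0 by rewrite lorNl hwm hc subrr oppr0.
    have [c' _ hc'] := U (- w) i1 i2 i3.
    exists (- c'); apply/matrixP => i j.
    have := congr1 (fun M : 'cV[R]_5 => M i j) hc'; rewrite /w !mxE => h; lra.
  + have i3 : lor w m = 0 by rewrite hwm hc subrr.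
    have [c' _ hc'] := U w (conj hw0 hwt) hwn i3.
    exists c'; apply/matrixP => i j.
    have := congr1 (fun M : 'cV[R]_5 => M i j) hc'; rewrite /w !mxE => h; lra.
  + exists 0.
    have := null_coord hw0; rewrite hwt expr0n /= => hs.
    have [h0 h1 h2 h3] := sq4_0 hs.
    apply: cV5P; move: h0 h1 h2 h3 hwt; rewrite /w !mxE => *; lra.
Qed.

End H.

Theorem theorem7p2 (R : realType) (A B : 'M[R]_5) :
  pure_parabolic A -> pure_parabolic B -> linked A B.
Proof.
move=> [n [m [hn hm ht ->]]] [p [q [hp hq ht' ->]]].
have [v [g [[hv pv] hnv hmr]]] := tangent_struct hn hm ht.
have [v' [g' [[hv' pv'] hpv hqr]]] := tangent_struct hp hq ht'.
have [z [hz pz hk Hfix Hinv]] : exists z, [/\ lor z z = 0, 0 < z tidx 0, lor v z != 0,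
   b0 v z *m v' = v' &
   forall x, lor x v' = 0 -> exists s : R, b0 v z *m x = - x + s *: v'].
  case: (eqVneq (lor v v') 0) => hk.
  - have ev' := null_orth hv hv' pv pv' hk.
    set l := v' tidx 0 / v tidx 0 in ev'.
    have hl : 0 < l by rewrite /l divr_gt0.
    set zz : 'cV[R]_5 := \col_i (if i == tidx then v i 0 else - v i 0).
    have hzz : lor zz zz = 0.
      have := null_coord hv; rewrite lorE !mxE /= !expr2 => h; lra.
    have hvz : lor v zz = - 2 * v tidx 0 ^+ 2.
      have := null_coord hv; rewrite lorE !mxE /= !expr2 => h; lra.
    have hk' : lor v zz != 0.
      rewrite hvz mulf_neq0 // ?oppr_eq0 ?pnatr_eq0 //; apply: expf_neq0; exact: lt0r_neq0.
    exists zz; split => //.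
    + by rewrite mxE /=.
    + by rewrite ev' -scalemxAr b0_fix.
    + move=> x hx.
      have hxv : lor x v = 0.
        move: hx; rewrite ev' lorZr => /eqP; rewrite mulf_eq0 => /orP [/eqP h|/eqP //].
        by move: hl; rewrite h ltxx.
      exists (2 / lor v zz * lor zz x / l).
      rewrite b0_inv // ev' scalerA divfK //; exact: lt0r_neq0.
  - exists v'; split => //.
    + by rewrite b0C b0_fix // lorC.
    + move=> x hx; exists (2 / lor v' v * lor v x).
      by rewrite b0C b0_inv // lorC.
set b := b0 v z.
have [[bJ btt] [bb bn1]] := b0_invol hv hz pv pz hk.
have bi : Defs.isometry b by [].
have Hfixv : b *m v = v by apply: b0_fix.
have Hinvv : forall x, lor x v = 0 -> exists s : R, b *m x = - x + s *: v.
  by move=> x hx; exists (2 / lor v z * lor z x); apply: b0_inv.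
have hA2 := inv_key g hn hv hnv bJ bb Hfixv Hinvv.
have hB2 := inv_key g' hp hv' hpv bJ bb Hfix Hinv.
rewrite -hmr in hA2; rewrite -hqr in hB2.
have trb : \tr b = -1 by apply: tr_b0.
have isoA : Defs.isometry (refl n *m refl m) by apply: iso_mul; apply: refl_iso.
have isoB : Defs.isometry (refl p *m refl q) by apply: iso_mul; apply: refl_iso.
exists (refl n *m refl m *m b), b, (b *m (refl p *m refl q)); split => //.
- split; first exact: iso_mul.
  split => // h1.
  have : b = refl m *m refl n.
    have := congr1 (mulmx (refl m *m refl n)) h1.
    rewrite mulmx1 !mulmxA -(mulmxA (refl m)) refl_sq // mulmx1 refl_sq // mul1mx //.
  move=> hb; move: trb; rewrite hb trace_refl2 // => h.
  have := sqr_ge0 (lor m n); lra.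
- split; first exact: iso_mul.
  split.
    have -> : b *m (refl p *m refl q) *m (b *m (refl p *m refl q)) =
      b *m ((refl p *m refl q *m b) *m (refl p *m refl q *m b)) *m b.
      by rewrite !mulmxA -(mulmxA _ b b) bb mulmx1.
    by rewrite hB2 mulmx1 bb.
  move=> h1.
  have : b = refl q *m refl p.
    have := congr1 (mulmx^~ (refl q *m refl p)) h1.
    rewrite mul1mx !mulmxA -(mulmxA _ (refl q) (refl q)) refl_sq // mulmx1.
    rewrite -(mulmxA b) refl_sq // mulmx1 //.
  move=> hb; move: trb; rewrite hb trace_refl2 // => h.
  have := sqr_ge0 (lor q p); lra.
- by rewrite -mulmxA bb mulmx1.
- by rewrite mulmxA bb mul1mx.
Qed.
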